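(* Let $R$ be an $n\times n$ irreducible nonnegative matrix with positive left and right eigenvectors $u$ and $v$ for the PF eigenvalue $1$, normalized so that $\langle u,v\rangle=1$. Define $A=D_u^{1/2}D_v^{-1/2}RD_u^{-1/2}D_v^{1/2}$. Then: (1) $\phi(A)=\phi(R)$; (2) $\lambda_i(A)=\lambda_i(R)$ for every $i$; (3) $\|A\|_2=1$; (4) if $R$ is reversible, i.e. $D_uRD_v=D_vR^TD_u$, then $A$ is symmetric.
   Context: $D_x$ denotes the diagonal matrix with the vector $x$ on its diagonal; square roots are entrywise positive. $\|\cdot\|_2$ is the operator norm. For an irreducible nonnegative $H$ with positive PF left/right eigenvectors $u',v'$ (for $A$ these are both $w=D_u^{1/2}D_v^{1/2}\mathbf 1$), the edge expansion is $\phi(H)=\min\phi_S(H)$ over nonempty $S\subseteq[n]$ with $\sum_{i\in S}u'_iv'_i\le\frac12\sum_iu'_iv'_i$, where $\phi_S(H)=\langle\mathbf 1_S,D_{u'}HD_{v'}\mathbf 1_{\overline S}\rangle/\langle\mathbf 1_S,D_{u'}HD_{v'}\mathbf 1\rangle$ and $\mathbf 1_S$ is the indicator vector of $S$. Eigenvalues are listed as $\lambda_1>\operatorname{Re}\lambda_2\ge\dots\ge\operatorname{Re}\lambda_n$. *)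

(* Defs.v *)
From HB Require Import structures.
From mathcomp Require Import all_boot all_order all_algebra.
From mathcomp Require Import classical_sets reals.
From mathcomp Require Import complex.
Set Implicit Arguments. Unset Strict Implicit. Unset Printing Implicit Defensive.
Import Order.TTheory GRing.Theory Num.Theory.
Local Open Scope ring_scope.

Definition Dg (R : realType) n (x : 'rV[R]_n) : 'M[R]_n := diag_mx x.

Definition vsqrt (R : realType) n (x : 'rV[R]_n) : 'rV[R]_n :=
  \row_i Num.sqrt (x 0 i).
Definition vinvsqrt (R : realType) n (x : 'rV[R]_n) : 'rV[R]_n :=
  \row_i (Num.sqrt (x 0 i))^-1.

Definition nonneg_mx (R : realType) n (M : 'M[R]_n) : Prop :=
  forall i j, 0 <= M i j.

Definition irreducible_mx (R : realType) n (M : 'M[R]_n) : Prop :=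
  forall i j : 'I_n, exists k : nat, 0 < (M ^+ k) i j.

Definition positive_rv (R : realType) n (x : 'rV[R]_n) : Prop :=
  forall i, 0 < x 0 i.

(* phi_S(H) w.r.t. left/right PF eigenvectors u', v' :
   <1_S, D_u' H D_v' 1_{~S}> / <1_S, D_u' H D_v' 1> *)
Definition phiS (R : realType) n (H : 'M[R]_n) (u v : 'rV[R]_n) (S : {set 'I_n}) : R :=
  (\sum_(i in S) \sum_(j in ~: S) u 0 i * H i j * v 0 j) /
  (\sum_(i in S) \sum_(j < n) u 0 i * H i j * v 0 j).

Definition admissible (R : realType) n (u v : 'rV[R]_n) (S : {set 'I_n}) : bool :=
  (S != finset.set0) && (\sum_(i in S) u 0 i * v 0 i <= (\sum_(i < n) u 0 i * v 0 i) / 2).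

(* edge expansion: minimum of phi_S over admissible S (1 if there is none;
   note phi_S <= 1 for nonnegative H, so the default never alters the min) *)
Definition edge_expansion (R : realType) n (H : 'M[R]_n) (u v : 'rV[R]_n) : R :=
  \big[Num.min/1]_(S : {set 'I_n} | admissible u v S) phiS H u v S.

Definition norm2 (R : realType) n (x : 'cV[R]_n) : R :=
  Num.sqrt (\sum_i x i 0 ^+ 2).
Definition opnorm2 (R : realType) n (M : 'M[R]_n) : R :=
  sup [set norm2 (M *m x) | x in [set x : 'cV[R]_n | norm2 x = 1]].

Definition eig_mult (R : realType) n (M : 'M[R]_n) (z : complex R) : nat :=
  mup z (map_poly (real_complex R) (char_poly M)).

(* Main.v *)
Require Import Defs.
From HB Require Import structures.
From mathcomp Require Import all_boot all_order all_algebra.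
From mathcomp Require Import classical_sets reals.
From mathcomp Require Import complex.
From mathcomp Require Import ring lra.
Import Order.TTheory GRing.Theory Num.Theory.
Local Open Scope ring_scope.

Lemma entry4 (R : realType) n (a b c d : 'rV[R]_n) (M : 'M[R]_n) i j :
  (Dg a *m Dg b *m M *m Dg c *m Dg d) i j = a 0 i * b 0 i * M i j * c 0 j * d 0 j.
Proof.
by rewrite /Dg -[diag_mx a *m diag_mx b *m M]mulmxA !mul_mx_diag !mul_diag_mx !mxE mulrA.
Qed.

Lemma entry2 (R : realType) n (a b : 'rV[R]_n) (M : 'M[R]_n) i j :
  (Dg a *m M *m Dg b) i j = a 0 i * M i j * b 0 j.
Proof.
by rewrite /Dg !mul_mx_diag mul_diag_mx !mxE.
Qed.
Lemma char_poly_sim (F : comNzRingType) n (D E P : 'M[F]_n) :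
  D *m E = 1%:M -> char_poly (D *m P *m E) = char_poly P.
Proof.
move=> DE.
rewrite /char_poly /char_poly_mx !map_mxM.
have {1}->: ('X%:M : 'M[{poly F}]_n) = map_mx polyC D *m 'X%:M *m map_mx polyC E.
  by rewrite scalar_mxC -mulmxA -map_mxM DE map_scalar_mx /= polyC1 mulmx1.
rewrite -mulmxBl -mulmxBr !det_mulmx [\det (map_mx _ D) * _]mulrC -mulrA -det_mulmx -map_mxM DE.
by rewrite map_scalar_mx /= polyC1 det1 mulr1.
Qed.
Lemma cs_weighted (R : realFieldType) n (a x w : 'I_n -> R) :
  (forall j, 0 <= a j) -> (forall j, 0 < w j) ->
  (\sum_j a j * x j) ^+ 2 <= (\sum_j a j * x j ^+ 2 / w j) * (\sum_j a j * w j).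
Proof.
move=> a0 w0.
rewrite expr2 big_distrl /=.
under eq_bigr do rewrite big_distrr /=.
rewrite big_distrl /=.
under [X in _ <= X]eq_bigr do rewrite big_distrr /=.
set L := \sum_i _.
set Rr := \sum_i _.
have e2 : forall y : R, y = (y + y) / 2 by move=> y; field.
rewrite (e2 L) (e2 Rr) ler_pM2r ?invr_gt0 ?ltr0n //.
rewrite {2}/Rr exchange_big /Rr -big_split /= /L -big_split /=.
apply: ler_sum => j _; rewrite -big_split -big_split /=; apply: ler_sum => k _.
have wj := w0 j; have wk := w0 k.
have hp : 0 <= a j * a k by apply: mulr_ge0.
have key : 2 * (x j * x k) <= x j ^+ 2 / w j * w k + x k ^+ 2 / w k * w j.
  rewrite -subr_ge0.
  have -> : x j ^+ 2 / w j * w k + x k ^+ 2 / w k * w j - 2 * (x j * x k)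
        = (x j * w k - x k * w j) ^+ 2 / (w j * w k).
    by field; apply/andP; split; apply: lt0r_neq0.
  by rewrite divr_ge0 ?sqr_ge0 ?mulr_ge0 ?ltW.
have := ler_wpM2l hp key.
move=> h.
suff [-> ->] : (a j * x j * (a k * x k) + a j * x j * (a k * x k) = a j * a k * (2 * (x j * x k))) /\
  (a j * x j ^+ 2 / w j * (a k * w k) + a k * x k ^+ 2 / w k * (a j * w j) =
   a j * a k * (x j ^+ 2 / w j * w k + x k ^+ 2 / w k * w j)) by [].
by split; ring.
Qed.

Theorem lemma3p3 (R : realType) (n : nat) (P : 'M[R]_n) (u v : 'rV[R]_n) :
  nonneg_mx P -> irreducible_mx P ->
  positive_rv u -> positive_rv v ->
  u *m P = u -> P *m v^T = v^T ->
  \sum_(i < n) u 0 i * v 0 i = 1 ->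
  let A := Dg (vsqrt u) *m Dg (vinvsqrt v) *m P *m Dg (vinvsqrt u) *m Dg (vsqrt v) in
  let w := \row_i Num.sqrt (u 0 i * v 0 i) in
  [/\ edge_expansion A w w = edge_expansion P u v,
      (forall z : R[i], eig_mult A z = eig_mult P z),
      opnorm2 A = 1
    & (Dg u *m P *m Dg v = Dg v *m P^T *m Dg u -> A^T = A)].
Proof.
move=> nnP _ up vp uP Pv suv A w.
pose s i := Num.sqrt (u 0 i); pose t i := Num.sqrt (v 0 i).
have sg : forall i, 0 < s i by move=> i; rewrite sqrtr_gt0.
have tg : forall i, 0 < t i by move=> i; rewrite sqrtr_gt0.
have sn : forall i, s i != 0 by move=> i; apply: lt0r_neq0.
have tn : forall i, t i != 0 by move=> i; apply: lt0r_neq0.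
have s2 : forall i, u 0 i = s i ^+ 2 by move=> i; rewrite sqr_sqrtr // ltW.
have t2 : forall i, v 0 i = t i ^+ 2 by move=> i; rewrite sqr_sqrtr // ltW.
have we : forall i, w 0 i = s i * t i by move=> i; rewrite mxE sqrtrM // ltW.
have Ae : forall i j, A i j = s i / t i * P i j / s j * t j.
  by move=> i j; rewrite /A entry4 !mxE.
have rowP : forall i, \sum_j P i j * t j ^+ 2 = t i ^+ 2.
  move=> i; rewrite -t2; have := congr1 (fun M : 'M[R]_(n,1) => M i 0) Pv; rewrite !mxE => <-.
  by apply: eq_bigr => j _; rewrite !mxE t2.
have colP : forall j, \sum_i s i ^+ 2 * P i j = s j ^+ 2.
  move=> j; rewrite -s2; have := congr1 (fun M : 'M[R]_(1,n) => M 0 j) uP; rewrite !mxE => <-.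
  by apply: eq_bigr => i _; rewrite s2.
have rowA : forall i, \sum_j A i j * w 0 j = w 0 i.
  move=> i; rewrite we.
  transitivity (s i / t i * \sum_j P i j * t j ^+ 2); last by rewrite rowP; field.
  rewrite big_distrr /=; apply: eq_bigr => j _; rewrite Ae we; field.
  by rewrite sn tn.
have colA : forall j, \sum_i w 0 i * A i j = w 0 j.
  move=> j; rewrite we.
  transitivity ((\sum_i s i ^+ 2 * P i j) * (t j / s j)); last by rewrite colP; field.
  rewrite big_distrl /=; apply: eq_bigr => i _; rewrite Ae we; field.
  by rewrite sn tn.
have A0 : forall i j, 0 <= A i j.
  move=> i j; rewrite Ae.
  have sg0 k : 0 <= s k := ltW (sg k); have tg0 k : 0 <= t k := ltW (tg k).
  by rewrite !mulr_ge0 ?invr_ge0 ?sg0 ?tg0 ?nnP.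
split.
- have ww i : w 0 i * w 0 i = u 0 i * v 0 i by rewrite we s2 t2; ring.
  rewrite /edge_expansion; apply: eq_big => S.
    by rewrite /admissible !(eq_bigr _ (fun i _ => ww i)).
  move=> _; rewrite /phiS; congr (_ / _); apply: eq_bigr => i _; apply: eq_bigr => j _;
    rewrite Ae !we s2 t2; field; by rewrite ?sn ?tn.
- move=> z; rewrite /eig_mult /A -mulmxA char_poly_sim //.
  rewrite -(mulmx1 (Dg (vsqrt u) *m Dg (vinvsqrt v))) !mulmxA.
  apply/matrixP => i j; rewrite entry4 !mxE -/(s i) -/(t i) -/(s j) -/(t j).
  have [->|ne] := eqVneq i j.
    by rewrite !mulr1n; field; rewrite ?sn ?tn.
  by rewrite !mulr0 !mul0r.
- have wpos j : 0 < w 0 j by rewrite we mulr_gt0.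
  rewrite /opnorm2.
  set E := (X in sup X).
  have ub : ubound E 1.
    move=> y [x /= nx <-].
    rewrite -nx /norm2 ler_sqrt; last by apply: sumr_ge0 => i _; exact: sqr_ge0.
    under eq_bigr do rewrite mxE.
    apply: le_trans; first by apply: ler_sum => i _; apply: (@cs_weighted R n (fun j => A i j) (fun j => x j 0) (fun j => w 0 j) (A0 i) wpos).
    under eq_bigr do rewrite rowA.
    rewrite le_eqVlt; apply/orP; left; apply/eqP.
    under eq_bigr do rewrite big_distrl /=.
    rewrite exchange_big; apply: eq_bigr => j _.
    transitivity ((\sum_i w 0 i * A i j) * (x j 0 ^+2 / w 0 j)).
      by rewrite big_distrl; apply: eq_bigr => i _ /=; ring.
    by rewrite colA; field; rewrite lt0r_neq0.
  have E1 : E 1.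
    exists (w^T).
      rewrite /= /norm2 -sqrtr1 -suv; congr Num.sqrt; apply: eq_bigr => i _.
      by rewrite mxE we s2 t2; ring.
    have -> : A *m w^T = w^T.
      apply/matrixP => i k; rewrite ord1 [LHS]mxE [RHS]mxE -rowA; apply: eq_bigr => j _; by rewrite [w^T _ _]mxE.
    rewrite /norm2 -sqrtr1 -suv; congr Num.sqrt; apply: eq_bigr => i _.
    by rewrite mxE we s2 t2; ring.
  apply/le_anti/andP; split.
    by apply: ge_sup => //; exists 1.
  by apply: sup_upper_bound => //; split; exists 1.
- move=> rev; apply/matrixP => i j.
  have := congr1 (fun M : 'M[R]_n => M i j) rev; rewrite /= !entry2 mxE => h.
  rewrite mxE !Ae; rewrite !s2 !t2 in h.
  transitivity ((t i ^+2 * P j i * s j ^+2) / (s i * t i * s j * t j)).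
    by field; rewrite ?sn ?tn.
  by rewrite -h; field; rewrite ?sn ?tn.
Qed.
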